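(* Let $n \geq 2$, $Q \geq 1$, $0<\mu_0 \leq (4\pi)^{-n}$ and $0<c_4<1$. Then the set \[ \bigcup_{\substack{4\mu_0 Q \leq q \leq 4Q \\ q \equiv 0 \ (\mathrm{mod}\ 4)}} \ \bigcup_{\substack{2 \leq a_2,\ldots,a_n \leq 2q \\ a_j \equiv 0\ (\mathrm{mod}\ 2)}} \Big\{ y' = (y_2,\ldots,y_n) \in [0,2\pi]^{n-1} : \Big| y_j - \frac{2\pi a_j}{q} \Big| < \frac{\pi c_4}{(\mu_0 Q)\, Q^{1/(n-1)}},\ j=2,\ldots,n \Big\} \] (the unions over integers $q$ and integer tuples $(a_2,\dots,a_n)$) has Lebesgue measure at least $c_4^{\,n-1} 3^{-(n-1)} 2^{-n}$. *)

(* Defs.v *)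
From Stdlib Require Import Reals Lra.
Open Scope R_scope.

Fixpoint prodR (f : nat -> R) (lo cnt : nat) : R :=
  match cnt with
  | O => 1
  | S c => f lo * prodR f (S lo) c
  end.

(* Points of R^{n-1} are represented by y : nat -> R, using only the
   coordinates y 2, ..., y n (as in the paper's y' = (y_2,...,y_n)). *)

Definition in_box (n : nat) (lo hi : nat -> R) (y : nat -> R) : Prop :=
  forall j, (2 <= j <= n)%nat -> lo j <= y j <= hi j.

Definition box_vol (n : nat) (lo hi : nat -> R) : R :=
  prodR (fun j => Rmax 0 (hi j - lo j)) 2 (n - 1).

(* Lebesgue outer measure of S ⊆ R^{n-1} is >= m: every countable cover of S
   by boxes has total volume >= m (covers with divergent volume sum are
   vacuously fine). *)
Definition lebesgue_outer_measure_ge (n : nat) (S : (nat -> R) -> Prop) (m : R)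
  : Prop :=
  forall (lo hi : nat -> nat -> R) (s : R),
    (forall y, S y -> exists k, in_box n (lo k) (hi k) y) ->
    infinite_sum (fun k => box_vol n (lo k) (hi k)) s ->
    m <= s.

Definition approx_set (n : nat) (Q mu0 c4 : R) (y : nat -> R) : Prop :=
  (forall j, (2 <= j <= n)%nat -> 0 <= y j <= 2 * PI) /\
  exists (q : nat) (a : nat -> nat),
    4 * mu0 * Q <= INR q /\ INR q <= 4 * Q /\ Nat.modulo q 4 = 0%nat /\
    forall j, (2 <= j <= n)%nat ->
      (2 <= a j <= 2 * q)%nat /\ Nat.modulo (a j) 2 = 0%nat /\
      Rabs (y j - 2 * PI * INR (a j) / INR q)
        < PI * c4 / ((mu0 * Q) * Rpower Q (/ INR (n - 1))).

(* Main.v *)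
Require Import Defs.
From Stdlib Require Import Reals Lra Lia Classical ClassicalEpsilon ZArith List.
Open Scope R_scope.

Fixpoint sumR (f : nat -> R) (N : nat) : R :=
  match N with O => 0 | S k => sumR f k + f k end.

Lemma sumR_ext f g N : (forall k, (k < N)%nat -> f k = g k) -> sumR f N = sumR g N.
Proof. induction N; simpl; intros H; auto. rewrite IHN; [rewrite H|]; auto; intros; apply H; lia. Qed.

Lemma sumR_le f g N : (forall k, (k<N)%nat -> f k <= g k) -> sumR f N <= sumR g N.
Proof. induction N; simpl; intros H; [lra|]. assert (f N <= g N) by (apply H; lia).
assert (sumR f N <= sumR g N) by (apply IHN; intros; apply H; lia). lra. Qed.

Lemma sumR_nonneg f N : (forall k, (k<N)%nat -> 0 <= f k) -> 0 <= sumR f N.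
Proof. intros H. replace 0 with (sumR (fun _ => 0) N). apply sumR_le; auto.
induction N; simpl; auto. rewrite IHN; [lra|]. intros; apply H; lia. Qed.

Lemma sumR_plus f g N : sumR (fun k => f k + g k) N = sumR f N + sumR g N.
Proof. induction N; simpl; [lra|]. rewrite IHN; lra. Qed.

Lemma sumR_mono f N M : (forall k, 0 <= f k) -> (N <= M)%nat -> sumR f N <= sumR f M.
Proof. intros H Hl. induction Hl; simpl; [lra|]. specialize (H m). lra. Qed.

Lemma sumR_const c N : sumR (fun _ => c) N = INR N * c.
Proof. induction N; simpl sumR; [simpl; lra|]. rewrite IHN, S_INR; lra. Qed.

Lemma sumR_scal c f N : sumR (fun k => c * f k) N = c * sumR f N.
Proof. induction N; simpl; [lra|]. rewrite IHN; lra. Qed.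

Lemma sumR_S f N : sumR f (S N) = sumR f N + f N.
Proof. reflexivity. Qed.

Lemma sumR_geom e N : sumR (fun k => e / 2^(S k)) N = e - e/2^N.
Proof. induction N. simpl; field.
rewrite sumR_S, IHN. simpl. field. apply pow_nonzero; lra. Qed.

Lemma sumR_single f N i0 : (i0 < N)%nat -> (forall i, (i<N)%nat -> i<>i0 -> f i = 0) -> sumR f N = f i0.
Proof. induction N; intros Hi H; [lia|]. simpl. destruct (Nat.eq_dec i0 N).
- subst. rewrite (sumR_ext _ (fun _ => 0)). rewrite sumR_const; lra. intros; apply H; lia.

- rewrite IHN; [rewrite (H N); [lra|lia|auto]|lia|]. intros; apply H; lia. Qed.

Lemma sumR_zero f N : (forall i, (i<N)%nat -> f i = 0) -> sumR f N = 0.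
Proof. intros H. rewrite (sumR_ext _ (fun _ => 0)); auto. rewrite sumR_const; lra. Qed.

Lemma sumR_ge_term f N k : (forall i, 0 <= f i) -> (k < N)%nat -> f k <= sumR f N.
Proof. intros H Hk. apply Rle_trans with (sumR f (S k)).
simpl. assert (0 <= sumR f k) by (apply sumR_nonneg; auto). lra.
apply sumR_mono; auto. Qed.

Lemma sum_f_R0_sumR f n : sum_f_R0 f n = sumR f (S n).
Proof. induction n; simpl; [lra|]. rewrite IHn. simpl. lra. Qed.

Lemma infinite_sum_partial f s : infinite_sum f s -> (forall k, 0 <= f k) ->
  forall K, sumR f K <= s.
Proof. intros Hs Hf K. apply Rnot_lt_le; intro Hlt.
destruct (Hs (sumR f K - s)) as [N0 HN]; [lra|].
specialize (HN (max N0 K) ltac:(lia)). rewrite sum_f_R0_sumR in HN.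
assert (sumR f K <= sumR f (S (max N0 K))) by (apply sumR_mono; auto; lia).
unfold Rdist in HN. rewrite Rabs_right in HN; lra. Qed.

Lemma prodR_ext f g lo c : (forall j, (lo <= j < lo + c)%nat -> f j = g j) -> prodR f lo c = prodR g lo c.
Proof. revert lo; induction c; simpl; intros lo H; auto. rewrite H by lia. rewrite (IHc (S lo)); auto.
intros; apply H; lia. Qed.

Lemma prodR_nonneg f lo c : (forall j, (lo <= j < lo + c)%nat -> 0 <= f j) -> 0 <= prodR f lo c.
Proof. revert lo; induction c; simpl; intros lo H; [lra|]. apply Rmult_le_pos; [apply H; lia|].
apply IHc; intros; apply H; lia. Qed.

Lemma prodR_le f g lo c : (forall j, (lo <= j < lo + c)%nat -> 0 <= f j <= g j) -> prodR f lo c <= prodR g lo c.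
Proof. revert lo; induction c; simpl; intros lo H; [lra|]. apply Rmult_le_compat.
apply H; lia. apply prodR_nonneg; intros; apply H; lia. apply H; lia. apply IHc; intros; apply H; lia. Qed.

Lemma prodR_zero f lo c j0 : (lo <= j0 < lo + c)%nat -> f j0 = 0 -> prodR f lo c = 0.
Proof. revert lo; induction c; simpl; intros lo H H0; [lia|]. destruct (Nat.eq_dec j0 lo).
subst; rewrite H0; lra. rewrite (IHc (S lo)); [lra|lia|auto]. Qed.

Lemma prodR_split f g h lo c j0 : (lo <= j0 < lo + c)%nat -> f j0 = g j0 + h j0 ->
  (forall j, j <> j0 -> f j = g j /\ f j = h j) -> prodR f lo c = prodR g lo c + prodR h lo c.
Proof. intros Hj H0 H.
assert (E: forall lo', (lo' > j0)%nat -> forall c', prodR f lo' c' = prodR g lo' c' /\ prodR f lo' c' = prodR h lo' c').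
{ intros lo' Hl c'. split; apply prodR_ext; intros; apply H; lia. }
revert lo Hj; induction c; simpl; intros lo Hj; [lia|]. destruct (Nat.eq_dec j0 lo).
- subst. rewrite H0. destruct (E (S lo) ltac:(lia) c) as [E1 E2]. rewrite <- E1, <- E2. lra.
- rewrite (IHc (S lo)) by lia. destruct (H lo) as [E1 E2]; auto. rewrite <- E1, <- E2. lra. Qed.

Lemma prodR_const c0 lo c : prodR (fun _ => c0) lo c = c0 ^ c.
Proof. revert lo; induction c; simpl; intros; auto. rewrite IHc; auto. Qed.

Lemma pow2_gt t : INR t < 2 ^ t.
Proof. induction t. simpl; lra. rewrite S_INR. simpl. assert (1 <= 2^t) by (apply pow_R1_Rle; lra). lra. Qed.

Definition ilen a b c e := Rmax 0 (Rmin b e - Rmax a c).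

Ltac rmm := unfold ilen, Rmax, Rmin in *; repeat destruct Rle_dec; try lra.

Lemma ilen_split a m b c e : a <= m -> m <= b -> ilen a b c e = ilen a m c e + ilen m b c e.
Proof. intros; rmm. Qed.
Lemma ilen_nonneg a b c e : 0 <= ilen a b c e.
Proof. rmm. Qed.
Lemma ilen_le_len a b c e : a <= b -> ilen a b c e <= b - a.
Proof. intros; rmm. Qed.
Lemma ilen_full a b c e : c <= a -> b <= e -> a <= b -> ilen a b c e = b - a.
Proof. intros; rmm. Qed.
Lemma ilen_zero_l a b c e : b < c -> ilen a b c e = 0.
Proof. intros; rmm. Qed.
Lemma ilen_zero_r a b c e : e < a -> ilen a b c e = 0.
Proof. intros; rmm. Qed.
Lemma ilen_le_vol a b c e : ilen a b c e <= Rmax 0 (e - c).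
Proof. rmm. Qed.
Lemma ilen_cont a b c e : a <= c -> c <= e -> e <= b -> ilen a b c e = Rmax 0 (e - c).
Proof. intros; rmm. Qed.

Lemma enlarge_gen (lo hi : nat -> R) c : forall st eps, eps > 0 -> exists del, del > 0 /\
  forall d', 0 <= d' <= del ->
  prodR (fun j => Rmax 0 (hi j - lo j + 2 * d')) st c <= prodR (fun j => Rmax 0 (hi j - lo j)) st c + eps.
Proof. induction c; intros st eps He.
- exists 1; split; [lra|]. intros; simpl; lra.
- set (A := Rmax 0 (hi st - lo st)). set (P := prodR (fun j => Rmax 0 (hi j - lo j)) (S st) c).
  assert (HA: 0 <= A) by (unfold A, Rmax; destruct Rle_dec; lra).
  assert (HP: 0 <= P) by (apply prodR_nonneg; intros; unfold Rmax; destruct Rle_dec; lra).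
  set (e1 := eps / (2 * (A + 1))).
  assert (He1 : e1 > 0) by (unfold e1; apply Rdiv_lt_0_compat; lra).
  destruct (IHc (S st) e1 He1) as [d1 [Hd1 H1]].
  set (d2 := eps / (4 * (P + e1 + 1))).
  assert (Hd2 : d2 > 0) by (unfold d2; apply Rdiv_lt_0_compat; lra).
  exists (Rmin d1 d2). split; [unfold Rmin; destruct Rle_dec; lra|].
  intros d' Hd'. simpl. fold A P.
  assert (Hm1: d' <= d1) by (apply Rle_trans with (Rmin d1 d2); [lra|apply Rmin_l]).
  assert (Hm2: d' <= d2) by (apply Rle_trans with (Rmin d1 d2); [lra|apply Rmin_r]).
  specialize (H1 d' ltac:(lra)).
  set (P' := prodR (fun j => Rmax 0 (hi j - lo j + 2 * d')) (S st) c) in *.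
  assert (HP' : 0 <= P') by (apply prodR_nonneg; intros; unfold Rmax; destruct Rle_dec; lra).
  set (A' := Rmax 0 (hi st - lo st + 2 * d')).
  assert (HA' : 0 <= A' <= A + 2 * d') by (unfold A', A, Rmax; repeat destruct Rle_dec; lra).
  assert (Hk1 : A * e1 <= eps / 2).
  { unfold e1. apply Rle_trans with ((A + 1) * (eps / (2 * (A + 1)))).
    apply Rmult_le_compat_r; [left; apply Rdiv_lt_0_compat; lra| lra].
    right; field; lra. }
  assert (Hk2 : 2 * d' * (P + e1) <= eps / 2).
  { apply Rle_trans with (2 * d2 * (P + e1 + 1)).
    apply Rmult_le_compat; lra.
    unfold d2. right; field; lra. }
  apply Rle_trans with ((A + 2 * d') * (P + e1)).
  fold P in H1. apply Rmult_le_compat; lra.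
  nra.
Qed.

Lemma enlarge n (lo hi : nat -> R) eps : eps > 0 -> exists del, del > 0 /\
  box_vol n (fun j => lo j - del) (fun j => hi j + del) <= box_vol n lo hi + eps.
Proof. intros He. destruct (enlarge_gen lo hi (n-1) 2 eps He) as [d [Hd H]].
exists d; split; auto. unfold box_vol.
rewrite (prodR_ext _ (fun j => Rmax 0 (hi j - lo j + 2 * d))). apply H; lra.
intros; f_equal; lra. Qed.

Definition vbox n (a b c e : nat -> R) := prodR (fun j => ilen (a j) (b j) (c j) (e j)) 2 (n-1).

Definition upd (f : nat -> R) j0 v := fun j => if Nat.eq_dec j j0 then v else f j.

Definition Inv n N (pl ph Ul Uh : nat -> nat -> R) (a b : nat -> R) :=
 (forall j, (2<=j<=n)%nat -> a j <= b j) /\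
 forall K, sumR (fun k => vbox n a b (Ul k) (Uh k)) K < sumR (fun i => vbox n a b (pl i) (ph i)) N.

Lemma vbox_nonneg n a b c e : 0 <= vbox n a b c e.
Proof. apply prodR_nonneg; intros; apply ilen_nonneg. Qed.

Lemma vbox_split n a b c e j0 m : (1 <= n)%nat -> (2 <= j0 <= n)%nat -> a j0 <= m <= b j0 ->
  vbox n a b c e = vbox n a (upd b j0 m) c e + vbox n (upd a j0 m) b c e.
Proof. intros Hn Hj Hm. unfold vbox. apply prodR_split with j0. lia.
- unfold upd. destruct Nat.eq_dec; [|congruence]. apply ilen_split; lra.
- intros j Hne. unfold upd. destruct Nat.eq_dec; [congruence|]. auto. Qed.

Lemma Inv_step n N pl ph Ul Uh a b j0 : (1 <= n)%nat -> (2 <= j0 <= n)%nat ->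
  Inv n N pl ph Ul Uh a b ->
  Inv n N pl ph Ul Uh a (upd b j0 ((a j0 + b j0)/2)) \/ Inv n N pl ph Ul Uh (upd a j0 ((a j0 + b j0)/2)) b.
Proof. intros Hn Hj [Hab HK]. set (m := (a j0 + b j0)/2).
assert (Hm : a j0 <= m <= b j0) by (specialize (Hab j0 Hj); unfold m; lra).
assert (Hle1 : forall j, (2<=j<=n)%nat -> a j <= upd b j0 m j).
{ intros j Hj'. unfold upd; destruct Nat.eq_dec; [subst; lra|auto]. }
assert (Hle2 : forall j, (2<=j<=n)%nat -> upd a j0 m j <= b j).
{ intros j Hj'. unfold upd; destruct Nat.eq_dec; [subst; lra|auto]. }
apply NNPP; intro Hno. apply not_or_and in Hno. destruct Hno as [H1 H2].
assert (E1 : exists K, sumR (fun i => vbox n a (upd b j0 m) (pl i) (ph i)) N <= sumR (fun k => vbox n a (upd b j0 m) (Ul k) (Uh k)) K).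
{ apply NNPP; intro Hc. apply H1; split; auto. intro K. apply Rnot_le_lt. intro Hle. apply Hc; exists K; auto. }
assert (E2 : exists K, sumR (fun i => vbox n (upd a j0 m) b (pl i) (ph i)) N <= sumR (fun k => vbox n (upd a j0 m) b (Ul k) (Uh k)) K).
{ apply NNPP; intro Hc. apply H2; split; auto. intro K. apply Rnot_le_lt. intro Hle. apply Hc; exists K; auto. }
destruct E1 as [K1 E1]. destruct E2 as [K2 E2].
specialize (HK (max K1 K2)).
rewrite (sumR_ext _ (fun k => vbox n a (upd b j0 m) (Ul k) (Uh k) + vbox n (upd a j0 m) b (Ul k) (Uh k))) in HK
 by (intros; apply vbox_split; auto).
rewrite (sumR_ext (fun i => vbox n a b (pl i) (ph i)) (fun k => vbox n a (upd b j0 m) (pl k) (ph k) + vbox n (upd a j0 m) b (pl k) (ph k))) in HK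
 by (intros; apply vbox_split; auto).
rewrite !sumR_plus in HK.
assert (sumR (fun k => vbox n a (upd b j0 m) (Ul k) (Uh k)) K1 <= sumR (fun k => vbox n a (upd b j0 m) (Ul k) (Uh k)) (max K1 K2))
  by (apply sumR_mono; [intros; apply vbox_nonneg|lia]).
assert (sumR (fun k => vbox n (upd a j0 m) b (Ul k) (Uh k)) K2 <= sumR (fun k => vbox n (upd a j0 m) b (Ul k) (Uh k)) (max K1 K2))
  by (apply sumR_mono; [intros; apply vbox_nonneg|lia]).
lra. Qed.

Lemma Inv_round_gen n N pl ph Ul Uh (Hn : (1 <= n)%nat) : forall c, (c <= n - 1)%nat -> forall a b,
  Inv n N pl ph Ul Uh a b -> exists a' b', Inv n N pl ph Ul Uh a' b' /\
  (forall j, (2<=j<=n)%nat -> a j <= a' j /\ b' j <= b j) /\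
  (forall j, (2 <= j < 2 + c)%nat -> b' j - a' j = (b j - a j)/2) /\
  (forall j, ~ (2 <= j < 2 + c)%nat -> a' j = a j /\ b' j = b j).
Proof. induction c; intros Hc a b HI.
- exists a, b. split; auto. split; [intros; lra|]. split; [intros; lia|]. auto.
- destruct (IHc ltac:(lia) a b HI) as [a1 [b1 [HI1 [Hn1 [Hh1 Hs1]]]]].
  set (j0 := (2 + c)%nat). assert (Hj0 : (2 <= j0 <= n)%nat) by (unfold j0; lia).
  destruct (Hs1 j0 ltac:(unfold j0; lia)) as [Ea Eb].
  assert (Hab1 : a1 j0 <= b1 j0) by (apply (proj1 HI1); auto).
  destruct (Inv_step n N pl ph Ul Uh a1 b1 j0 Hn Hj0 HI1) as [HL|HR].
  + exists a1, (upd b1 j0 ((a1 j0 + b1 j0)/2)). split; auto. split; [|split].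
    * intros j Hj. destruct (Hn1 j Hj). unfold upd; destruct Nat.eq_dec; [subst; lra|lra].
    * intros j Hj. unfold upd; destruct Nat.eq_dec. subst. rewrite Ea, Eb. lra. apply Hh1. lia.
    * intros j Hj. unfold upd; destruct Nat.eq_dec. unfold j0 in *; lia. apply Hs1. lia.
  + exists (upd a1 j0 ((a1 j0 + b1 j0)/2)), b1. split; auto. split; [|split].
    * intros j Hj. destruct (Hn1 j Hj). unfold upd; destruct Nat.eq_dec; [subst; lra|lra].
    * intros j Hj. unfold upd; destruct Nat.eq_dec. subst. rewrite Ea, Eb. lra. apply Hh1. lia.
    * intros j Hj. unfold upd; destruct Nat.eq_dec. unfold j0 in *; lia. apply Hs1. lia.
Qed.

Lemma seq_build {A : Type} (P : A -> Prop) (Rl : A -> A -> Prop) (x0 : A) :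
  P x0 -> (forall x, P x -> exists y, P y /\ Rl x y) ->
  exists s : nat -> A, s O = x0 /\ forall t, P (s t) /\ Rl (s t) (s (S t)).
Proof. intros H0 H.
assert (F : forall p : {x | P x}, {q : {x | P x} | Rl (proj1_sig p) (proj1_sig q)}).
{ intros [x Hx]. destruct (constructive_indefinite_description _ (H x Hx)) as [y [Hy Hr]].
  exists (exist _ y Hy). simpl; auto. }
set (sq := fun t => nat_rect (fun _ => {x | P x}) (exist _ x0 H0) (fun _ p => proj1_sig (F p)) t).
exists (fun t => proj1_sig (sq t)). split; [reflexivity|]. intro t. split.
apply (proj2_sig (sq t)). change (sq (S t)) with (proj1_sig (F (sq t))). apply (proj2_sig (F (sq t))). Qed.

Lemma gap_lemma n (x : nat -> R) (pl ph : nat -> nat -> R) N (P : nat -> Prop) :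
 (forall i, (i<N)%nat -> P i -> exists j, (2<=j<=n)%nat /\ (x j < pl i j \/ ph i j < x j)) ->
 exists eta, eta > 0 /\ forall i, (i<N)%nat -> P i -> exists j, (2<=j<=n)%nat /\ (x j + eta < pl i j \/ ph i j + eta < x j).
Proof. induction N; intros H.
- exists 1; split; [lra|]; intros; lia.
- destruct IHN as [e1 [He1 H1]]. intros; apply H; auto; lia.
  destruct (classic (P N)) as [HP|HP].
  + destruct (H N ltac:(lia) HP) as [j [Hj Hj']].
    set (g := Rmax (pl N j - x j) (x j - ph N j)).
    assert (Hg : g > 0) by (unfold g, Rmax; destruct Rle_dec; lra).
    exists (Rmin e1 (g/2)). split. unfold Rmin; destruct Rle_dec; lra.
    intros i Hi HPi. assert (Hm1 : Rmin e1 (g/2) <= e1) by apply Rmin_l.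
    assert (Hm2 : Rmin e1 (g/2) <= g/2) by apply Rmin_r.
    destruct (Nat.eq_dec i N).
    * subst. exists j. split; auto. unfold g, Rmax in *; destruct Rle_dec; lra.
    * destruct (H1 i ltac:(lia) HPi) as [j' [Hj1 Hj2]]. exists j'. split; auto. lra.
  + exists e1. split; auto. intros i Hi HPi. destruct (Nat.eq_dec i N). subst; contradiction.
    apply H1; auto; lia.
Qed.

Lemma box_vol_nonneg n lo hi : 0 <= box_vol n lo hi.
Proof. apply prodR_nonneg; intros; unfold Rmax; destruct Rle_dec; lra. Qed.

Lemma exists_t eta : eta > 0 -> exists t, 2 * PI / 2 ^ t < eta.
Proof. intros He. destruct (archimed (2*PI/eta)) as [H1 H2].
assert (Hp : 2 * PI / eta > 0) by (apply Rdiv_lt_0_compat; [pose proof PI_RGT_0; lra|lra]).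
assert (Hz : (0 <= up (2*PI/eta))%Z) by (apply le_IZR; lra).
exists (Z.to_nat (up (2*PI/eta))).
assert (E : INR (Z.to_nat (up (2 * PI / eta))) = IZR (up (2*PI/eta))).
{ rewrite INR_IZR_INZ. rewrite Z2Nat.id; auto. }
pose proof (pow2_gt (Z.to_nat (up (2 * PI / eta)))) as Hp2. rewrite E in Hp2.
set (T := 2 ^ Z.to_nat (up (2 * PI / eta))) in *.
assert (HT : T > 0) by lra.
assert (H3: 2*PI = (2*PI/eta)*eta) by (field; lra).
assert (H4: 2*PI < T*eta) by nra.
unfold Rdiv. apply Rmult_lt_reg_r with T; auto. rewrite Rmult_assoc, Rinv_l by lra. lra. Qed.

Lemma core n Sset N (pl ph : nat -> nat -> R) :
 (1 <= n)%nat ->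
 (forall i, (i<N)%nat -> forall j, (2<=j<=n)%nat -> 0 <= pl i j /\ pl i j <= ph i j /\ ph i j <= 2*PI) ->
 (forall i, (i<N)%nat -> forall y, in_box n (pl i) (ph i) y -> Sset y) ->
 (forall i i', (i<N)%nat -> (i'<N)%nat -> i<>i' -> exists j, (2<=j<=n)%nat /\ (ph i j < pl i' j \/ ph i' j < pl i j)) ->
 lebesgue_outer_measure_ge n Sset (sumR (fun i => box_vol n (pl i) (ph i)) N).
Proof.
intros Hn Hbox HS Hdisj lo hi s Hcov Hsum.
pose proof PI_RGT_0 as HPI.
set (A := sumR (fun i => box_vol n (pl i) (ph i)) N).
apply Rnot_lt_le; intro Hlt.
set (eps := (A - s)/2). assert (Heps : eps > 0) by (unfold eps; lra).
assert (Hd : forall k, {del | del > 0 /\ box_vol n (fun j => lo k j - del) (fun j => hi k j + del) <= box_vol n (lo k) (hi k) + eps / 2^(S k)}).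
{ intro k; apply constructive_indefinite_description; apply enlarge; apply Rdiv_lt_0_compat; [lra| apply pow_lt; lra]. }
set (del := fun k => proj1_sig (Hd k)).
assert (Hdel : forall k, del k > 0 /\ box_vol n (fun j => lo k j - del k) (fun j => hi k j + del k) <= box_vol n (lo k) (hi k) + eps / 2^(S k)).
{ intro k. exact (proj2_sig (Hd k)). }
set (Ul := fun k j => lo k j - del k). set (Uh := fun k j => hi k j + del k).
assert (Hpart : forall K, sumR (fun k => box_vol n (lo k) (hi k)) K <= s).
{ apply infinite_sum_partial; auto. intros; apply box_vol_nonneg. }
set (a0 := fun _ : nat => 0). set (b0 := fun _ : nat => 2 * PI).
assert (HI0 : Inv n N pl ph Ul Uh a0 b0).
{ split. intros; unfold a0, b0; lra. intro K.
  assert (EA : sumR (fun i => vbox n a0 b0 (pl i) (ph i)) N = A).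
  { apply sumR_ext. intros i Hi. unfold vbox, box_vol. apply prodR_ext. intros j Hj.
    destruct (Hbox i Hi j ltac:(lia)) as [h1 [h2 h3]]. apply ilen_cont; unfold a0, b0; lra. }
  rewrite EA.
  apply Rle_lt_trans with (sumR (fun k => box_vol n (lo k) (hi k) + eps / 2 ^ S k) K).
  apply sumR_le. intros k Hk. apply Rle_trans with (box_vol n (Ul k) (Uh k)).
  unfold vbox, box_vol. apply prodR_le. intros j Hj. split; [apply ilen_nonneg|apply ilen_le_vol].
  apply (proj2 (Hdel k)).
  rewrite sumR_plus, sumR_geom. specialize (Hpart K).
  assert (0 < eps / 2^K) by (apply Rdiv_lt_0_compat; [lra|apply pow_lt; lra]).
  unfold eps in *. lra. }
set (P := fun ab : (nat -> R) * (nat -> R) => Inv n N pl ph Ul Uh (fst ab) (snd ab)).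
set (Rl := fun ab ab' : (nat -> R) * (nat -> R) => forall j, (2<=j<=n)%nat ->
   fst ab j <= fst ab' j /\ snd ab' j <= snd ab j /\ snd ab' j - fst ab' j = (snd ab j - fst ab j)/2).
destruct (seq_build P Rl (a0, b0)) as [sq [Hs0 Hst]].
{ exact HI0. }
{ intros [a b] Hab. unfold P in Hab; simpl in Hab.
  destruct (Inv_round_gen n N pl ph Ul Uh Hn (n-1) ltac:(lia) a b Hab) as [a' [b' [H1 [H2 [H3 H4]]]]].
  exists (a', b'). split. exact H1. intros j Hj. simpl. destruct (H2 j Hj). split; auto. split; auto.
  apply H3; lia. }
set (a := fun t => fst (sq t)). set (b := fun t => snd (sq t)).
assert (F1 : forall t j, (2<=j<=n)%nat -> a t j <= b t j).
{ intros t j Hj. apply (proj1 (proj1 (Hst t))); auto. }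
assert (F2 : forall t j, (2<=j<=n)%nat -> b t j - a t j = 2 * PI / 2^t).
{ induction t; intros j Hj. unfold a, b; rewrite Hs0; simpl. unfold a0, b0. field.
  destruct (proj2 (Hst t) j Hj) as [_ [_ E]]. unfold a, b in *. rewrite E, IHt by auto. simpl. field.
  apply pow_nonzero; lra. }
assert (F3 : forall t t', (t <= t')%nat -> forall j, (2<=j<=n)%nat -> a t j <= a t' j /\ b t' j <= b t j).
{ intros t t' Ht. induction Ht; intros j Hj. lra.
  destruct (IHHt j Hj). destruct (proj2 (Hst m) j Hj) as [E1 [E2 _]]. unfold a, b in *. split; lra. }
assert (F4 : forall t t' j, (2<=j<=n)%nat -> a t' j <= b t j).
{ intros t t' j Hj. destruct (le_ge_dec t t').
  - destruct (F3 t t' l j Hj). specialize (F1 t' j Hj). lra.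
  - destruct (F3 t' t g j Hj). specialize (F1 t j Hj). lra. }
assert (Hb0 : forall j, b 0%nat j = 2 * PI) by (intros; unfold b; rewrite Hs0; reflexivity).
set (E := fun j v => exists t, v = Rmin (a t j) (2 * PI)).
assert (Hx : forall j, {v | is_lub (E j) v}).
{ intro j. apply completeness. exists (2*PI). intros v [t Ht]. subst. apply Rmin_r.
  exists (Rmin (a 0%nat j) (2*PI)). exists 0%nat. reflexivity. }
set (x := fun j => proj1_sig (Hx j)).
assert (F5 : forall j t, (2<=j<=n)%nat -> a t j <= x j <= b t j).
{ intros j t Hj. destruct (proj2_sig (Hx j)) as [Hub Hl]. fold (x j) in Hub, Hl.
  assert (Hat : a t j <= 2 * PI) by (rewrite <- (Hb0 j); apply F4; auto).
  split.
  - apply Hub. exists t. unfold Rmin; destruct Rle_dec; lra.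
  - apply Hl. intros v [t' Ht']. subst. apply Rle_trans with (a t' j). apply Rmin_l. apply F4; auto. }
destruct (classic (exists i0, (i0 < N)%nat /\ in_box n (pl i0) (ph i0) x)) as [[i0 [Hi0 Hin]]|Hnone].
- assert (HSx : Sset x) by (apply (HS i0); auto).
  destruct (Hcov x HSx) as [k0 Hk0].
  destruct (gap_lemma n x pl ph N (fun i => i <> i0)) as [eta [Heta Hg]].
  { intros i Hi Hne. destruct (Hdisj i0 i Hi0 Hi (fun e => Hne (eq_sym e))) as [j [Hj Hj']].
    exists j. split; auto. destruct (Hin j Hj). lra. }
  set (eta' := Rmin eta (del k0)).
  assert (He' : eta' > 0) by (unfold eta', Rmin; destruct Rle_dec; pose proof (proj1 (Hdel k0)); lra).
  assert (He1 : eta' <= eta) by apply Rmin_l. assert (He2 : eta' <= del k0) by apply Rmin_r.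
  destruct (exists_t eta' He') as [t Ht].
  assert (Hside : forall j, (2<=j<=n)%nat -> b t j - a t j < eta') by (intros; rewrite F2; auto).
  destruct (proj1 (Hst t)) as [_ HK]. specialize (HK (S k0)).
  fold (a t) (b t) in HK.
  assert (Eu : vbox n (a t) (b t) (Ul k0) (Uh k0) = prodR (fun j => b t j - a t j) 2 (n-1)).
  { unfold vbox. apply prodR_ext. intros j Hj. destruct (Hk0 j ltac:(lia)).
    specialize (Hside j ltac:(lia)). destruct (F5 j t ltac:(lia)).
    apply ilen_full; unfold Ul, Uh; lra. }
  assert (Ep : sumR (fun i => vbox n (a t) (b t) (pl i) (ph i)) N = vbox n (a t) (b t) (pl i0) (ph i0)).
  { apply (sumR_single (fun i => vbox n (a t) (b t) (pl i) (ph i))); auto. intros i Hi Hne. destruct (Hg i Hi Hne) as [j [Hj [Hj'|Hj']]];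
    specialize (Hside j Hj); destruct (F5 j t Hj); unfold vbox.
    - apply prodR_zero with j. lia. apply ilen_zero_l. lra.
    - apply prodR_zero with j. lia. apply ilen_zero_r. lra. }
  assert (Hle : vbox n (a t) (b t) (pl i0) (ph i0) <= prodR (fun j => b t j - a t j) 2 (n-1)).
  { apply prodR_le. intros j Hj. split. apply ilen_nonneg. apply ilen_le_len. apply F1; lia. }
  assert (Hge : vbox n (a t) (b t) (Ul k0) (Uh k0) <= sumR (fun k => vbox n (a t) (b t) (Ul k) (Uh k)) (S k0)).
  { apply (sumR_ge_term (fun k => vbox n (a t) (b t) (Ul k) (Uh k))). intros; apply vbox_nonneg. lia. }
  lra.
- destruct (gap_lemma n x pl ph N (fun _ => True)) as [eta [Heta Hg]].
  { intros i Hi _. apply NNPP; intro Hc. apply Hnone. exists i. split; auto.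
    intros j Hj. apply NNPP; intro Hc2. apply Hc. exists j. split; auto. lra. }
  destruct (exists_t eta Heta) as [t Ht].
  assert (Hside : forall j, (2<=j<=n)%nat -> b t j - a t j < eta) by (intros; rewrite F2; auto).
  destruct (proj1 (Hst t)) as [_ HK]. specialize (HK 0%nat).
  fold (a t) (b t) in HK.
  rewrite (sumR_zero (fun i => vbox n (a t) (b t) (pl i) (ph i)) N) in HK. simpl in HK. lra.
  intros i Hi. destruct (Hg i Hi I) as [j [Hj [Hj'|Hj']]];
    specialize (Hside j Hj); destruct (F5 j t Hj); unfold vbox.
  + apply prodR_zero with j. lia. apply ilen_zero_l. lra.
  + apply prodR_zero with j. lia. apply ilen_zero_r. lra.
Qed.

Definition Tn n Q := Rpower Q (/ INR (n - 1)).

Definition valid_pt n Q mu0 (p : nat -> R) : Prop :=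
  exists m : nat, mu0 * Q <= INR m <= Q /\ (1 <= m)%nat /\
  exists bb : nat -> nat, forall j, (2 <= j <= n)%nat -> (1 <= bb j <= 4 * m)%nat /\ p j = PI * INR (bb j) / INR m.

Lemma family_meas n Q mu0 c4 (N : nat) (p : nat -> nat -> R) (h : R) :
  (2 <= n)%nat -> 0 < h -> h < PI * c4 / ((mu0 * Q) * Tn n Q) ->
  (forall i, (i < N)%nat -> valid_pt n Q mu0 (p i) /\ forall j, (2 <= j <= n)%nat -> h <= p i j <= 2 * PI - h) ->
  (forall i i', (i < N)%nat -> (i' < N)%nat -> i <> i' -> exists j, (2 <= j <= n)%nat /\ 2 * h < Rabs (p i j - p i' j)) ->
  lebesgue_outer_measure_ge n (approx_set n Q mu0 c4) (INR N * (2 * h) ^ (n - 1)).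
Proof.
intros Hn Hh Hhb Hv Hsep.
assert (E : INR N * (2 * h) ^ (n - 1) = sumR (fun i => box_vol n (fun j => p i j - h) (fun j => p i j + h)) N).
{ rewrite <- sumR_const. apply sumR_ext. intros i Hi. unfold box_vol.
  rewrite <- (prodR_const (2*h) 2 (n-1)). apply prodR_ext. intros j Hj. unfold Rmax; destruct Rle_dec; lra. }
rewrite E. apply core. lia.
- intros i Hi j Hj. destruct (Hv i Hi) as [_ H]. specialize (H j Hj). lra.
- intros i Hi y Hy. destruct (Hv i Hi) as [[m [Hm [Hm1 [bb Hbb]]]] Hr].
  split.
  + intros j Hj. specialize (Hy j Hj). specialize (Hr j Hj). simpl in Hy. lra.
  + exists (4 * m)%nat, (fun j => 2 * bb j)%nat. split; [|split; [|split]].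
    * rewrite mult_INR. simpl INR at 1. lra.
    * rewrite mult_INR. simpl INR at 1. lra.
    * rewrite Nat.mul_comm. apply Nat.Div0.mod_mul.
    * intros j Hj. destruct (Hbb j Hj) as [Hb Hp]. split; [lia|]. split.
      rewrite Nat.mul_comm. apply Nat.Div0.mod_mul.
      specialize (Hy j Hj). simpl in Hy.
      assert (HmR : INR m >= 1) by (apply Rle_ge; change 1 with (INR 1); apply le_INR; lia).
      replace (2 * PI * INR (2 * bb j) / INR (4 * m)) with (p i j).
      2:{ rewrite Hp, !mult_INR. simpl INR. field. lra. }
      apply Rle_lt_trans with h; [|exact Hhb].
      apply Rabs_le; lra.
- intros i i' Hi Hi' Hne. destruct (Hsep i i' Hi Hi' Hne) as [j [Hj Ha]]. exists j. split; auto.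
  unfold Rabs in Ha; destruct Rcase_abs; lra.
Qed.

Definition dig (L t i : nat) : nat := ((i / L ^ t) mod L)%nat.

Fixpoint enc (L d : nat) (a : nat -> nat) : nat :=
  match d with O => O | S d' => (a O + L * enc L d' (fun t => a (S t)))%nat end.

Lemma enc_lt L d a : (forall t, (t < d)%nat -> (a t < L)%nat) -> (enc L d a < L ^ d)%nat.
Proof. revert a; induction d; intros a H; simpl; [lia|].
specialize (IHd (fun t => a (S t)) ltac:(intros; apply H; lia)). specialize (H 0%nat ltac:(lia)).
nia. Qed.

Lemma dig_step L t v w : (0 < L)%nat -> (v < L)%nat -> dig L (S t) (v + L * w) = dig L t w.
Proof. intros HL Hv. unfold dig. rewrite Nat.pow_succ_r'. rewrite <- Nat.Div0.div_div.
f_equal. f_equal. rewrite Nat.mul_comm, Nat.div_add by lia. rewrite Nat.div_small by lia. lia. Qed.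

Lemma dig_zero L v w : (0 < L)%nat -> (v < L)%nat -> dig L 0 (v + L * w) = v.
Proof. intros HL Hv. unfold dig. rewrite Nat.pow_0_r, Nat.div_1_r. rewrite Nat.mul_comm, Nat.Div0.mod_add.
apply Nat.mod_small; auto. Qed.

Lemma dig_enc L d a t : (0 < L)%nat -> (forall s, (s < d)%nat -> (a s < L)%nat) -> (t < d)%nat -> dig L t (enc L d a) = a t.
Proof. revert a t; induction d; intros a t HL H Ht; [lia|]. change (enc L (S d) a) with (a O + L * enc L d (fun t => a (S t)))%nat. destruct t.
- apply dig_zero; auto; apply H; lia.
- rewrite dig_step by (auto; apply H; lia). rewrite IHd; auto; try lia. intros; apply H; lia. Qed.

Lemma dig_lt L t i : (0 < L)%nat -> (dig L t i < L)%nat.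
Proof. intros; unfold dig; apply Nat.mod_upper_bound; lia. Qed.

Lemma dig_inj L d : (0 < L)%nat -> forall i i', (i < L ^ d)%nat -> (i' < L ^ d)%nat ->
  (forall t, (t < d)%nat -> dig L t i = dig L t i') -> i = i'.
Proof. intro HL. induction d; intros i i' Hi Hi' H.
- simpl in *; lia.
- assert (E0 := H 0%nat ltac:(lia)). unfold dig in E0. rewrite Nat.pow_0_r, !Nat.div_1_r in E0.
  assert (Ed : (i / L = i' / L)%nat).
  { apply IHd. simpl in Hi. apply Nat.Div0.div_lt_upper_bound; lia.
    simpl in Hi'. apply Nat.Div0.div_lt_upper_bound; lia.
    intros t Ht. specialize (H (S t) ltac:(lia)). unfold dig in *.
    rewrite Nat.pow_succ_r', <- !Nat.Div0.div_div in H. auto. }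
  rewrite (Nat.div_mod i L), (Nat.div_mod i' L) by lia. rewrite Ed, E0. reflexivity. Qed.

Lemma sumR_app g a b : sumR g (a + b) = sumR g a + sumR (fun k => g (a + k)%nat) b.
Proof. induction b. rewrite Nat.add_0_r; simpl; lra.
rewrite Nat.add_succ_r. simpl. rewrite IHb. lra. Qed.

Lemma sumR_block g L M : sumR g (L * M) = sumR (fun w => sumR (fun v => g (v + L * w)%nat) L) M.
Proof. induction M. rewrite Nat.mul_0_r; reflexivity.
rewrite Nat.mul_succ_r, sumR_app, IHM. simpl. f_equal. apply sumR_ext. intros; f_equal; lia. Qed.

Lemma prodR_shift g lo c : prodR g (S lo) c = prodR (fun t => g (S t)) lo c.
Proof. revert lo; induction c; simpl; intros; auto. rewrite IHc; auto. Qed.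

Lemma sumR_prod_dig f L d : (0 < L)%nat ->
  sumR (fun i => prodR (fun t => f (dig L t i)) 0 d) (L ^ d) = (sumR f L) ^ d.
Proof. intros HL. induction d.
- simpl. lra.
- simpl (L ^ S d)%nat. rewrite sumR_block.
  rewrite (sumR_ext _ (fun w => sumR f L * prodR (fun t => f (dig L t w)) 0 d)).
  rewrite sumR_scal, IHd. simpl. lra.
  intros w Hw. rewrite <- (Rmult_comm (prodR _ 0 d)), <- sumR_scal. apply sumR_ext. intros v Hv.
  simpl. rewrite dig_zero by auto. rewrite prodR_shift. rewrite Rmult_comm. f_equal.
  apply prodR_ext. intros t Ht. rewrite dig_step; auto. Qed.

Lemma sumR_swap (g : nat -> nat -> R) A B : sumR (fun a => sumR (fun b => g a b) B) A = sumR (fun b => sumR (fun a => g a b) A) B.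
Proof. induction A. simpl. rewrite sumR_zero; auto.
simpl. rewrite IHA. rewrite <- sumR_plus. reflexivity. Qed.

Lemma pigeon M : forall f : nat -> nat, (forall i, (i <= M)%nat -> (f i < M)%nat) ->
  exists i j, (i < j <= M)%nat /\ f i = f j.
Proof. induction M; intros f H.
- specialize (H 0%nat ltac:(lia)); lia.
- destruct (classic (exists i, (i <= M)%nat /\ f i = f (S M))) as [[i [Hi E]]|Hno].
  + exists i, (S M). split; [lia|auto].
  + set (g := fun i => if Nat.ltb (f i) (f (S M)) then f i else (f i - 1)%nat).
    destruct (IHM g) as [i [j [Hij E]]].
    * intros i Hi. unfold g. assert (f i <> f (S M)) by (intro; apply Hno; exists i; auto).
      pose proof (H i ltac:(lia)). pose proof (H (S M) ltac:(lia)).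
      destruct (Nat.ltb_spec (f i) (f (S M))); lia.
    * exists i, j. split; [lia|]. unfold g in E.
      assert (f i <> f (S M)) by (intro; apply Hno; exists i; split; auto; lia).
      assert (f j <> f (S M)) by (intro; apply Hno; exists j; split; auto; lia).
      destruct (Nat.ltb_spec (f i) (f (S M))); destruct (Nat.ltb_spec (f j) (f (S M))); lia.
Qed.

Definition indic (P : Prop) : R := if excluded_middle_informative P then 1 else 0.

Lemma indic_01 P : 0 <= indic P <= 1.
Proof. unfold indic; destruct excluded_middle_informative; lra. Qed.
Lemma indic_true (P : Prop) : P -> indic P = 1.
Proof. unfold indic; destruct excluded_middle_informative; tauto. Qed.
Lemma indic_false (P : Prop) : ~ P -> indic P = 0.
Proof. unfold indic; destruct excluded_middle_informative; tauto. Qed.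
Lemma indic_mono (P P' : Prop) : (P -> P') -> indic P <= indic P'.
Proof. intros H; unfold indic; do 2 destruct excluded_middle_informative; try lra. tauto. Qed.

Lemma count_nat_int lo hi L : sumR (fun v => indic (lo <= v < hi)%nat) L = INR (Nat.min L hi - lo).
Proof. induction L. simpl; reflexivity.
rewrite sumR_S, IHL. destruct (classic (lo <= L < hi)%nat).
- rewrite indic_true by auto. replace (Nat.min (S L) hi - lo)%nat with (S (Nat.min L hi - lo)) by lia.
  rewrite S_INR; lra.
- rewrite indic_false by auto. replace (Nat.min (S L) hi - lo)%nat with (Nat.min L hi - lo)%nat by lia. lra. Qed.

Lemma count_real_int (al be : R) L : sumR (fun v => indic (al < INR v < be)) L <= Rmax 0 (be - al + 1).
Proof.
set (lo := Z.to_nat (up al)). set (hi := Z.to_nat (up be)).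
apply Rle_trans with (sumR (fun v => indic (lo <= v < hi)%nat) L).
- apply sumR_le. intros v _. apply indic_mono. intros [H1 H2]. split.
  + unfold lo. destruct (archimed al). assert (Hv: (up al <= Z.of_nat v)%Z).
    { assert (Hlt : (up al - 1 < Z.of_nat v)%Z). apply lt_IZR. rewrite <- INR_IZR_INZ, minus_IZR. simpl. lra. lia. }
    lia.
  + unfold hi. destruct (archimed be). assert (Hv: (Z.of_nat v < up be)%Z).
    { apply lt_IZR. rewrite <- INR_IZR_INZ. lra. } lia.
- rewrite count_nat_int. destruct (archimed al) as [a1 a2]. destruct (archimed be) as [b1 b2].
  destruct (Nat.le_gt_cases (Nat.min L hi) lo).
  + replace (Nat.min L hi - lo)%nat with 0%nat by lia. simpl. unfold Rmax; destruct Rle_dec; lra.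
  + assert (E : INR (Nat.min L hi - lo) <= INR hi - INR lo).
    { rewrite minus_INR by lia. assert (INR (Nat.min L hi) <= INR hi) by (apply le_INR; lia). lra. }
    assert (Ehi : INR hi = IZR (up be)).
    { unfold hi. rewrite INR_IZR_INZ, Z2Nat.id; auto. apply le_IZR. 
      assert (INR lo >= 0) by (apply Rle_ge, pos_INR). 
      assert (0 < hi)%nat by lia. assert (Z.to_nat (up be) <> 0%nat) by (unfold hi in *; lia).
      destruct (up be); simpl in *; try lia; apply IZR_le; lia. }
    assert (Elo : IZR (up al) <= INR lo).
    { unfold lo. destruct (Z.le_gt_cases 0 (up al)).
      rewrite INR_IZR_INZ, Z2Nat.id; auto; lra.
      replace (Z.to_nat (up al)) with 0%nat by lia. simpl. apply IZR_le. lia. }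
    unfold Rmax; destruct Rle_dec; lra.
Qed.

Definition fr (z : R) := z - IZR (Int_part z).

Lemma fr_bounds z : 0 <= fr z < 1.
Proof. unfold fr. destruct (base_Int_part z). lra. Qed.

Lemma Int_part_bounds z : IZR (Int_part z) <= z < IZR (Int_part z) + 1.
Proof. destruct (base_Int_part z). lra. Qed.

Lemma dirichlet (d K : nat) (x : nat -> R) : (1 <= K)%nat ->
  exists m : nat, (1 <= m <= K ^ d)%nat /\ exists b : nat -> Z, forall t, (t < d)%nat ->
  Rabs (INR m * x t - IZR (b t)) < / INR K.
Proof. intros HK.
assert (HKR : INR K >= 1) by (apply Rle_ge; change 1 with (INR 1); apply le_INR; lia).
set (cz := fun i t => Int_part (INR K * fr (INR i * x t))).
assert (Hcz : forall i t, (0 <= cz i t)%Z /\ (cz i t < Z.of_nat K)%Z).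
{ intros i t. unfold cz. set (z := INR K * fr (INR i * x t)).
  assert (Hz : 0 <= z < INR K) by (unfold z; destruct (fr_bounds (INR i * x t)); split; nra).
  destruct (Int_part_bounds z). split.
  - assert (Hm : (-1 < Int_part z)%Z) by (apply lt_IZR; simpl; lra). lia.
  - apply lt_IZR. rewrite <- INR_IZR_INZ. lra. }
set (cell := fun i t => Z.to_nat (cz i t)).
set (f := fun i => enc K d (cell i)).
destruct (pigeon (K ^ d) f) as [i [j [Hij Ef]]].
{ intros i _. unfold f. apply enc_lt. intros t _. unfold cell. destruct (Hcz i t). lia. }
exists (j - i)%nat. split; [split; lia|].
exists (fun t => (Int_part (INR j * x t) - Int_part (INR i * x t))%Z).
intros t Ht.
assert (Ec : cz i t = cz j t).
{ assert (E1 : dig K t (f i) = cell i t) by (apply dig_enc; [lia| |auto]; intros s _; unfold cell; destruct (Hcz i s); lia).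
  assert (E2 : dig K t (f j) = cell j t) by (apply dig_enc; [lia| |auto]; intros s _; unfold cell; destruct (Hcz j s); lia).
  rewrite Ef in E1. rewrite E1 in E2. unfold cell in E2. destruct (Hcz i t), (Hcz j t). lia. }
rewrite minus_IZR, minus_INR by lia.
replace ((INR j - INR i) * x t - (IZR (Int_part (INR j * x t)) - IZR (Int_part (INR i * x t))))
  with (fr (INR j * x t) - fr (INR i * x t)) by (unfold fr; ring).
unfold cz in Ec.
set (fi := fr (INR i * x t)) in *. set (fj := fr (INR j * x t)) in *.
destruct (Int_part_bounds (INR K * fi)) as [a1 a2]. destruct (Int_part_bounds (INR K * fj)) as [b1 b2].
rewrite Ec in a1, a2.
assert (Habs : Rabs (INR K * fj - INR K * fi) < 1) by (apply Rabs_def1; lra).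
apply Rmult_lt_reg_l with (INR K). lra.
rewrite Rinv_r by lra. rewrite <- (Rabs_pos_eq (INR K)) at 1 by lra. rewrite <- Rabs_mult.
replace (INR K * (fj - fi)) with (INR K * fj - INR K * fi) by ring. exact Habs.
Qed.

Lemma floor_nat x : 0 <= x -> exists m : nat, INR m <= x < INR m + 1.
Proof. intros Hx. destruct (base_Int_part x) as [H1 H2].
assert (Hz : (0 <= Int_part x)%Z) by (assert (-1 < Int_part x)%Z by (apply lt_IZR; simpl; lra); lia).
exists (Z.to_nat (Int_part x)). rewrite INR_IZR_INZ, Z2Nat.id by auto. lra. Qed.

Lemma T_ge1 n Q : (2 <= n)%nat -> 1 <= Q -> 1 <= Tn n Q.
Proof. intros Hn HQ. unfold Tn. rewrite <- (Rpower_O Q) at 1 by lra. apply Rle_Rpower; auto.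
left. apply Rinv_0_lt_compat. apply lt_0_INR. lia. Qed.

Lemma T_pow n Q : (2 <= n)%nat -> 1 <= Q -> Tn n Q ^ (n - 1) = Q.
Proof. intros Hn HQ. pose proof (T_ge1 n Q Hn HQ). rewrite <- Rpower_pow by lra. unfold Tn.
rewrite Rpower_mult, Rinv_l. apply Rpower_1; lra. apply not_0_INR; lia. Qed.

Lemma pow_le_base a b k : 0 <= a -> a <= b -> a ^ k <= b ^ k.
Proof. intros; apply pow_incr; lra. Qed.

Lemma pow_ge_1 a k : 1 <= a -> 1 <= a ^ k.
Proof. intros; apply pow_R1_Rle; lra. Qed.

Lemma mono_meas n S m m' : lebesgue_outer_measure_ge n S m' -> m <= m' -> lebesgue_outer_measure_ge n S m.
Proof. intros H Hm lo hi s H1 H2. specialize (H lo hi s H1 H2). lra. Qed.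

Lemma target_eq n c4 : (2 <= n)%nat -> c4 ^ (n - 1) * (/ 3) ^ (n - 1) * (/ 2) ^ n = (c4 / 6) ^ (n - 1) / 2.
Proof. intros Hn. replace n with (S (n - 1)) at 3 by lia. simpl (_ ^ S _).
unfold Rdiv. replace (/6) with (/3 * /2) by field. rewrite !Rpow_mult_distr. ring. Qed.

Lemma mu0_small n mu0 : (2 <= n)%nat -> mu0 <= / (4 * PI) ^ n -> mu0 <= / 144.
Proof. intros Hn H. pose proof PI_RGT_0. assert (HP: PI > 3) by (pose proof PI2_3_2; lra).
assert (144 <= (4 * PI) ^ n).
{ replace n with (2 + (n - 2))%nat by lia. rewrite pow_add. simpl.
  assert (1 <= (4 * PI) ^ (n - 2)) by (apply pow_ge_1; lra). nra. }
apply Rle_trans with (/ (4 * PI) ^ n); auto. apply Rinv_le_contravar; lra. Qed.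

Lemma m0_exists Q : 1 <= Q -> exists m0 : nat, (1 <= m0)%nat /\ Q / 2 < INR m0 <= Q /\ Q < INR m0 + 1.
Proof. intros HQ. destruct (floor_nat Q) as [m [H1 H2]]; [lra|].
assert (Hm : (1 <= m)%nat). { destruct m. simpl in *. lra. lia. }
assert (1 <= INR m) by (change 1 with (INR 1); apply le_INR; auto).
exists m. repeat split; auto; lra. Qed.

Lemma regime0 n Q mu0 c4 : (2 <= n)%nat -> 1 <= Q -> 0 < mu0 -> mu0 <= / 144 -> 0 < c4 -> c4 < 1 ->
  mu0 * Q * Tn n Q < c4 ->
  lebesgue_outer_measure_ge n (approx_set n Q mu0 c4) ((c4 / 6) ^ (n - 1) / 2).
Proof. intros Hn HQ Hmu Hmu' Hc Hc' Hr. pose proof PI_RGT_0 as HPI.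
assert (HP3 : PI > 3) by (pose proof PI2_3_2; lra).
pose proof (T_ge1 n Q Hn HQ) as HT.
destruct (m0_exists Q HQ) as [m0 [Hm1 [Hm2 Hm3]]].
assert (Hm0R : 1 <= INR m0) by (change 1 with (INR 1); apply le_INR; auto).
apply mono_meas with (INR 1 * (2 * PI) ^ (n - 1)).
- apply (family_meas n Q mu0 c4 1 (fun _ _ => PI) PI); auto.
  + assert (0 < mu0 * Q * Tn n Q) by (apply Rmult_lt_0_compat; [apply Rmult_lt_0_compat|]; lra).
    assert (Hq : 1 < c4 / (mu0 * Q * Tn n Q)).
    { apply Rmult_lt_reg_r with (mu0 * Q * Tn n Q); auto.
      replace (c4 / (mu0 * Q * Tn n Q) * (mu0 * Q * Tn n Q)) with c4 by (field; lra). lra. }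
    replace (PI*c4/(mu0*Q*Tn n Q)) with (PI*(c4/(mu0*Q*Tn n Q))) by (unfold Rdiv; ring). nra.
  + intros i Hi. split.
    * exists m0. assert (mu0 * Q <= Q / 2) by nra.
      split; [split; lra|]. split; auto.
      exists (fun _ => m0). intros j Hj. split; [lia|]. field. lra.
    * intros; lra.
  + intros i i' Hi Hi' Hne. lia.
- simpl INR. rewrite Rmult_1_l.
  assert (H1 : (c4 / 6) ^ (n - 1) <= 1 ^ (n - 1)) by (apply pow_le_base; lra).
  assert (H2 : 1 ^ (n - 1) <= (2 * PI) ^ (n - 1)) by (apply pow_le_base; lra).
  assert (0 <= (c4/6) ^ (n - 1)) by (apply pow_le; lra). lra.
Qed.

Lemma INR_dist_ge1 a b : a <> b -> 1 <= Rabs (INR a - INR b).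
Proof. intros H. destruct (Nat.lt_ge_cases a b) as [Hl|Hl].
- assert (INR (S a) <= INR b) by (apply le_INR; lia).
  rewrite S_INR in *. rewrite Rabs_left by lra. lra.
- assert (INR (S b) <= INR a) by (apply le_INR; lia). rewrite S_INR in *. rewrite Rabs_right by lra. lra.
Qed.

Lemma dig_differ L d i i' : (0 < L)%nat -> (i < L ^ d)%nat -> (i' < L ^ d)%nat -> i <> i' ->
  exists t, (t < d)%nat /\ dig L t i <> dig L t i'.
Proof. intros HL Hi Hi' Hne. apply NNPP; intro Hc. apply Hne. apply (dig_inj L d HL); auto.
intros t Ht. apply NNPP; intro Hc2. apply Hc. exists t; auto. Qed.

Lemma regime1 n Q mu0 c4 : (2 <= n)%nat -> 1 <= Q -> 0 < mu0 -> mu0 <= / 144 -> 0 < c4 -> c4 < 1 ->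
  c4 <= mu0 * Q * Tn n Q -> mu0 * Tn n Q <= 3 ->
  lebesgue_outer_measure_ge n (approx_set n Q mu0 c4) ((c4 / 6) ^ (n - 1) / 2).
Proof. intros Hn HQ Hmu Hmu' Hc Hc' Hr H3.
pose proof PI_RGT_0 as HPI. assert (HP3 : PI > 3) by (pose proof PI2_3_2; lra). pose proof PI_4 as HP4.
pose proof (T_ge1 n Q Hn HQ) as HT. set (T := Tn n Q) in *.
set (X := mu0 * Q * T). assert (HX : 0 < X) by (unfold X; apply Rmult_lt_0_compat; [apply Rmult_lt_0_compat|]; lra).
set (rho := PI / X). assert (Hrho : rho * X = PI) by (unfold rho; field; lra).
assert (Hrho0 : 0 < rho) by (unfold rho; apply Rdiv_lt_0_compat; lra).
set (Rr := c4 * rho). set (h := Rr / 2).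
fold X in Hr.
assert (HR : Rr <= PI) by (unfold Rr; assert (0 <= (X - c4) * rho) by (apply Rmult_le_pos; lra); nra).
destruct (m0_exists Q HQ) as [m0 [Hm1 [Hm2 Hm3]]].
assert (Hm0R : 1 <= INR m0) by (change 1 with (INR 1); apply le_INR; auto).
set (a := PI / INR m0). assert (Ha : a * INR m0 = PI) by (unfold a; field; lra).
assert (Ha0 : 0 < a) by (unfold a; apply Rdiv_lt_0_compat; lra).
set (D := a + 2 * rho). assert (HD0 : 0 < D) by (unfold D; lra).
assert (HD : D <= 3 * PI * rho).
{ assert (X <= 3 * Q) by (unfold X; nra). assert (a < 6 * rho) by nra. unfold D. nra. }
destruct (floor_nat (PI / (2 * D))) as [L0 [HL1 HL2]].
{ left; apply Rdiv_lt_0_compat; unfold D; lra. }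
set (L := S L0). assert (HL : INR L = INR L0 + 1) by (unfold L; apply S_INR).
assert (HL0D : INR L0 * D <= PI / 2).
{ apply Rle_trans with (PI / (2 * D) * D). apply Rmult_le_compat_r; lra. right; field; lra. }
set (d := (n - 1)%nat).
set (c := fun i j => 3 * PI / 4 + INR (dig L (j - 2) i) * D).
set (zz := fun i j => up (c i j * INR m0 / PI - 1/2)).
set (p := fun i j => PI * INR (Z.to_nat (zz i j)) / INR m0).
assert (Hc1 : forall i j, 3 * PI / 4 <= c i j <= 5 * PI / 4).
{ intros i j. unfold c. assert (Hdl : (dig L (j-2) i < L)%nat) by (apply dig_lt; unfold L; lia).
  assert (INR (dig L (j - 2) i) <= INR L0) by (apply le_INR; unfold L in *; lia).
  assert (0 <= INR (dig L (j - 2) i)) by apply pos_INR. nra. }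
assert (Hz : m0 = 1%nat \/ 2 <= INR m0).
{ destruct (Nat.eq_dec m0 1). auto. right. change 2 with (INR 2). apply le_INR. lia. }
assert (Hzz : forall i j, 1 <= IZR (zz i j) /\ INR m0 / 2 <= IZR (zz i j) <= 3 * INR m0 / 2 /\
   Rabs (p i j - c i j) <= a / 2 /\ INR (Z.to_nat (zz i j)) = IZR (zz i j)).
{ intros i j. set (y := c i j * INR m0 / PI).
  assert (Hy : 3 * INR m0 / 4 <= y <= 5 * INR m0 / 4).
  { unfold y. destruct (Hc1 i j). split.
    apply Rle_trans with (3 * PI / 4 * INR m0 / PI). right; field; lra.
    unfold Rdiv. apply Rmult_le_compat_r. left; apply Rinv_0_lt_compat; lra. nra.
    apply Rle_trans with (5 * PI / 4 * INR m0 / PI). 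
    unfold Rdiv. apply Rmult_le_compat_r. left; apply Rinv_0_lt_compat; lra. nra. right; field; lra. }
  destruct (archimed (y - 1/2)) as [A1 A2]. fold (zz i j) in A1, A2. change (up (y - 1/2)) with (zz i j) in A1, A2.
  assert (Hz1 : 1 <= IZR (zz i j)).
  { assert (Hp : (0 < zz i j)%Z) by (apply lt_IZR; simpl; lra). apply IZR_le. lia. }
  assert (Hz2 : INR m0 / 2 <= IZR (zz i j) <= 3 * INR m0 / 2).
  { destruct Hz as [E|E].
    - assert (Hlt2 : (zz i j < 2)%Z) by (apply lt_IZR; rewrite E in Hy; simpl in Hy; lra).
      assert (IZR (zz i j) <= 1) by (apply IZR_le; lia). rewrite E; simpl. lra.
    - lra. }
  assert (Ei : INR (Z.to_nat (zz i j)) = IZR (zz i j)).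
  { rewrite INR_IZR_INZ, Z2Nat.id; auto. apply le_IZR. lra. }
  split; auto. split; auto. split; auto.
  unfold p. rewrite Ei.
  replace (PI * IZR (zz i j) / INR m0 - c i j) with (a * (IZR (zz i j) - y)).
  2:{ unfold a, y. field. lra. }
  rewrite Rabs_mult, Rabs_pos_eq by lra.
  assert (Rabs (IZR (zz i j) - y) <= 1/2) by (apply Rabs_le; lra). nra. }
apply mono_meas with (INR (L ^ d) * (2 * h) ^ (n - 1)).
- apply (family_meas n Q mu0 c4 (L ^ d) p h); auto.
  + unfold h, Rr. apply Rmult_lt_0_compat; [apply Rmult_lt_0_compat|]; lra.
  + assert (E : PI * c4 / (mu0 * Q * T) = Rr) by (unfold Rr, rho; fold X; field; lra).
    fold T. rewrite E. unfold h. assert (0 < Rr) by (unfold Rr; nra). lra.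
  + intros i Hi. destruct (Hzz i 2%nat) as [_ [_ [_ _]]]. split.
    * exists m0. assert (mu0 * Q <= Q / 2) by nra.
      split; [split; lra|]. split; auto.
      exists (fun j => Z.to_nat (zz i j)). intros j Hj. destruct (Hzz i j) as [B1 [[B2 B3] [B4 B5]]].
      split; [split|].
      -- apply INR_le. rewrite B5. simpl. lra.
      -- apply INR_le. rewrite B5, mult_INR. simpl. lra.
      -- reflexivity.
    * intros j Hj. destruct (Hzz i j) as [B1 [[B2 B3] [B4 B5]]]. unfold p. rewrite B5.
      assert (Hh : h <= PI / 2) by (unfold h; lra).
      assert (PI / 2 <= PI * IZR (zz i j) / INR m0).
      { apply Rle_trans with (PI * (INR m0 / 2) / INR m0). right; field; lra.
        unfold Rdiv. apply Rmult_le_compat_r. left; apply Rinv_0_lt_compat; lra. nra. }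
      assert (PI * IZR (zz i j) / INR m0 <= 3 * PI / 2).
      { apply Rle_trans with (PI * (3 * INR m0 / 2) / INR m0).
        unfold Rdiv. apply Rmult_le_compat_r. left; apply Rinv_0_lt_compat; lra. nra. right; field; lra. }
      lra.
  + intros i i' Hi Hi' Hne.
    destruct (dig_differ L d i i' ltac:(unfold L; lia) Hi Hi' Hne) as [t [Ht Hdt]].
    exists (t + 2)%nat. split; [unfold d in Ht; lia|].
    destruct (Hzz i (t+2)%nat) as [_ [_ [B1 _]]]. destruct (Hzz i' (t+2)%nat) as [_ [_ [B2 _]]].
    assert (Hcc : D <= Rabs (c i (t+2)%nat - c i' (t+2)%nat)).
    { unfold c. replace (t + 2 - 2)%nat with t by lia.
      replace (3 * PI / 4 + INR (dig L t i) * D - (3 * PI / 4 + INR (dig L t i') * D))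
        with ((INR (dig L t i) - INR (dig L t i')) * D) by ring.
      rewrite Rabs_mult, (Rabs_pos_eq D) by lra. pose proof (INR_dist_ge1 _ _ Hdt). nra. }
    assert (Htri : Rabs (c i (t+2)%nat - c i' (t+2)%nat) <= Rabs (p i (t+2)%nat - c i (t+2)%nat) + Rabs (p i (t+2)%nat - p i' (t+2)%nat) + Rabs (p i' (t+2)%nat - c i' (t+2)%nat)).
    { set (u1 := p i (t+2)%nat) in *. set (u2 := p i' (t+2)%nat) in *.
      set (v1 := c i (t+2)%nat) in *. set (v2 := c i' (t+2)%nat) in *.
      unfold Rabs; repeat destruct Rcase_abs; lra. }
    unfold h, Rr. assert (c4 * rho < rho) by nra. unfold D in Hcc. lra.
- rewrite pow_INR.
  assert (E2 : 2 * h = Rr) by (unfold h; field). rewrite E2, <- Rpow_mult_distr.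
  assert (HLR : c4 / 6 <= INR L * Rr).
  { unfold Rr. assert (PI / (2 * D) * (c4 * rho) >= c4 / 6).
    { apply Rle_ge. apply Rle_trans with (PI / (2 * (3 * PI * rho)) * (c4 * rho)).
      right. field. split; lra.
      apply Rmult_le_compat_r. nra. unfold Rdiv. apply Rmult_le_compat_l. lra.
      apply Rinv_le_contravar; lra. }
    assert (INR L * (c4*rho) >= PI/(2*D) * (c4*rho)) by (apply Rle_ge, Rmult_le_compat_r; nra). lra. }
  assert ((c4 / 6) ^ (n - 1) <= (INR L * Rr) ^ (n - 1)) by (apply pow_le_base; lra).
  assert (0 <= (c4 / 6) ^ (n - 1)) by (apply pow_le; lra). unfold d. lra.
Qed.

Lemma length_filter_seq (f : nat -> bool) M :
  INR (length (filter f (seq 0 M))) = sumR (fun i => if f i then 1 else 0) M.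
Proof. induction M. reflexivity.
rewrite seq_S, filter_app, length_app, plus_INR, IHM, sumR_S. simpl. destruct (f M); simpl; lra. Qed.

Lemma up_le_int (A : R) (b : Z) : A < IZR b -> (up A <= b)%Z.
Proof. intros H. destruct (archimed A) as [H1 H2].
assert (Hlt : (up A - 1 < b)%Z) by (apply lt_IZR; rewrite minus_IZR; simpl; lra). lia. Qed.

Lemma int_lt_up (B : R) (b : Z) : IZR b < B -> (b < up B)%Z.
Proof. intros H. destruct (archimed B). apply lt_IZR. lra. Qed.

Lemma nb_bound (A B : R) : A < B -> INR (Z.to_nat (up B - up A)) <= B - A + 1.
Proof. intros H. destruct (archimed A), (archimed B).
destruct (Z.le_gt_cases (up B - up A) 0).
- replace (Z.to_nat (up B - up A)) with 0%nat by lia. simpl. lra.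
- rewrite INR_IZR_INZ, Z2Nat.id by lia. rewrite minus_IZR. lra. Qed.

Lemma Ebound (m K L : nat) (u T rho : R) :
  (1 <= m)%nat -> INR m <= u -> 100 <= INR K -> T <= (101/100) * INR K -> 0 < rho -> rho * (u * T) = PI ->
  (forall v, (v < L)%nat -> INR v * (4 * rho) <= 3 * PI / 2) -> 3 * PI / (2 * (4 * rho)) <= INR L ->
  sumR (fun v => indic (exists b : Z, Rabs (PI / 4 + INR v * (4 * rho) - PI * IZR b / INR m) < PI / (INR m * INR K))) L
   <= 11 / T * INR L.
Proof. intros Hm Hmu HK HTK Hrho Hr HvL HL.
pose proof PI_RGT_0 as HPI. assert (HP3 : PI > 3) by (pose proof PI2_3_2; lra). pose proof PI_4 as HP4.
assert (HmR : 1 <= INR m) by (change 1 with (INR 1); apply le_INR; auto).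
assert (Hu : 1 <= u) by lra.
assert (HT : 0 < T).
{ destruct (Rlt_or_le 0 T); auto. assert (u * T <= 0) by nra. assert (rho * (u * T) <= 0) by nra. lra. }
set (D := 4 * rho). assert (HD : 0 < D) by (unfold D; lra).
set (w := PI / (INR m * INR K)).
assert (Hw : 0 < w) by (unfold w; apply Rdiv_lt_0_compat; nra).
set (A := INR m * (PI / 4 - w) / PI). set (B := INR m * (7 * PI / 4 + w) / PI).
assert (HAB : A < B) by (unfold A, B; unfold Rdiv; apply Rmult_lt_compat_r; [apply Rinv_0_lt_compat; lra| nra]).
set (b0 := up A). set (nb := Z.to_nat (up B - up A)).
set (ccv := fun v => PI / 4 + INR v * D).
apply Rle_trans with (sumR (fun v => sumR (fun t => indic (Rabs (ccv v - PI * IZR (b0 + Z.of_nat t) / INR m) < w)) nb) L).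
{ apply sumR_le. intros v Hv. destruct (classic (exists b : Z, Rabs (PI / 4 + INR v * (4 * rho) - PI * IZR b / INR m) < PI / (INR m * INR K))) as [[b Hb]|Hno].
  - rewrite indic_true by (exists b; auto).
    fold D w in Hb. fold (ccv v) in Hb.
    assert (Hc : PI / 4 <= ccv v <= 7 * PI / 4).
    { unfold ccv. specialize (HvL v Hv). fold D in HvL. assert (0 <= INR v * D) by (apply Rmult_le_pos; [apply pos_INR|lra]). lra. }
    assert (Hb2 : ccv v - w < PI * IZR b / INR m < ccv v + w) by (apply Rabs_def2 in Hb; lra).
    assert (HbA : A < IZR b).
    { unfold A. apply Rmult_lt_reg_r with (PI / INR m). apply Rdiv_lt_0_compat; lra.
      replace (INR m * (PI / 4 - w) / PI * (PI / INR m)) with (PI/4 - w) by (field; lra).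
      replace (IZR b * (PI / INR m)) with (PI * IZR b / INR m) by (field; lra). lra. }
    assert (HbB : IZR b < B).
    { unfold B. apply Rmult_lt_reg_r with (PI / INR m). apply Rdiv_lt_0_compat; lra.
      replace (INR m * (7 * PI / 4 + w) / PI * (PI / INR m)) with (7 * PI/4 + w) by (field; lra).
      replace (IZR b * (PI / INR m)) with (PI * IZR b / INR m) by (field; lra). lra. }
    pose proof (up_le_int A b HbA). pose proof (int_lt_up B b HbB).
    apply Rle_trans with (indic (Rabs (ccv v - PI * IZR (b0 + Z.of_nat (Z.to_nat (b - b0))) / INR m) < w)).
    + rewrite indic_true. lra. unfold b0. rewrite Z2Nat.id by lia. replace (up A + (b - up A))%Z with b by ring. auto.
    + apply (sumR_ge_term (fun t => indic (Rabs (ccv v - PI * IZR (b0 + Z.of_nat t) / INR m) < w))).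
      intros; apply indic_01. unfold nb, b0. lia.
  - rewrite indic_false by auto. apply sumR_nonneg. intros; apply indic_01. }
rewrite sumR_swap.
apply Rle_trans with (sumR (fun t => 2 * w / D + 1) nb).
{ apply sumR_le. intros t Ht. set (z := PI * IZR (b0 + Z.of_nat t) / INR m).
  apply Rle_trans with (sumR (fun v => indic ((z - w - PI/4) / D < INR v < (z + w - PI/4) / D)) L).
  - apply sumR_le. intros v Hv. apply indic_mono. intros Habs. apply Rabs_def2 in Habs. unfold ccv in Habs.
    split.
    + apply Rmult_lt_reg_r with D; auto. replace ((z - w - PI / 4) / D * D) with (z - w - PI/4) by (field; lra). lra.
    + apply Rmult_lt_reg_r with D; auto. replace ((z + w - PI / 4) / D * D) with (z + w - PI/4) by (field; lra). lra.
  - eapply Rle_trans. apply count_real_int.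
    replace ((z + w - PI / 4) / D - (z - w - PI / 4) / D + 1) with (2 * w / D + 1) by (field; lra).
    unfold Rmax; destruct Rle_dec; [lra|]. assert (0 < 2 * w / D) by (apply Rdiv_lt_0_compat; lra). lra. }
rewrite sumR_const.
assert (Hnb : INR nb <= (3/2) * INR m + 2 / INR K + 1).
{ unfold nb. eapply Rle_trans. apply nb_bound; auto. unfold A, B, w. right. field. split; lra. }
set (Y := 2 * w / D).
assert (HY : Y = u * T / (2 * INR m * INR K)).
{ unfold Y, w, D. apply Rmult_eq_reg_r with (rho * (2 * INR m * INR K)).
  2: (assert (0 < rho * (2 * INR m * INR K)) by (repeat apply Rmult_lt_0_compat; lra); lra).
  replace (u * T / (2 * INR m * INR K) * (rho * (2 * INR m * INR K))) with (rho * (u * T)) by (field; repeat split; lra).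
  rewrite Hr. field. repeat split; lra. }
assert (HY0 : 0 <= Y) by (unfold Y; left; apply Rdiv_lt_0_compat; lra).
assert (HmY : INR m * Y <= (101/200) * u).
{ rewrite HY. replace (INR m * (u * T / (2 * INR m * INR K))) with (u / 2 * (T / INR K)) by (field; repeat split; lra).
  assert (T / INR K <= (101/100)).
  { apply Rmult_le_reg_r with (INR K). lra. replace (T / INR K * INR K) with T by (field; lra). lra. }
  assert (0 <= u / 2) by lra. nra. }
assert (HYu : Y <= (101/200) * u) by nra.
assert (HK1 : 2 / INR K <= (2/100)).
{ apply Rmult_le_reg_r with (INR K). lra. replace (2 / INR K * INR K) with 2 by (field; lra). lra. }
assert (HLu : 33 / 8 * u <= 11 / T * INR L).
{ assert (E : 3 * PI / (2 * (4 * rho)) = 3 * u * T / 8).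
  { apply Rmult_eq_reg_r with (8 * rho). 2: lra.
    replace (3 * PI / (2 * (4 * rho)) * (8 * rho)) with (3 * PI) by (field; lra).
    replace (3 * u * T / 8 * (8 * rho)) with (3 * (rho * (u * T))) by field. rewrite Hr; ring. }
  rewrite E in HL.
  apply Rle_trans with (11 / T * (3 * u * T / 8)). right; field; lra.
  apply Rmult_le_compat_l; auto. left; apply Rdiv_lt_0_compat; lra. }
assert (HnbY : INR nb * (Y + 1) <= ((3/2) * INR m + (102/100)) * (Y + 1)).
{ apply Rmult_le_compat_r; lra. }
fold Y. nra.
Qed.

Lemma indic_compl P : indic P + indic (~ P) = 1.
Proof. unfold indic. do 2 destruct excluded_middle_informative; tauto || lra. Qed.

Lemma regime2 n Q mu0 c4 : (2 <= n)%nat -> 1 <= Q -> 0 < mu0 -> mu0 <= / (4 * PI) ^ n -> 0 < c4 -> c4 < 1 ->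
  3 < mu0 * Tn n Q ->
  lebesgue_outer_measure_ge n (approx_set n Q mu0 c4) ((c4 / 6) ^ (n - 1) / 2).
Proof. intros Hn HQ Hmu Hmu4 Hc Hc' H3.
pose proof PI_RGT_0 as HPI. assert (HP3 : PI > 3) by (pose proof PI2_3_2; lra). pose proof PI_4 as HP4.
pose proof (mu0_small n mu0 Hn Hmu4) as Hmu'.
pose proof (T_ge1 n Q Hn HQ) as HT. pose proof (T_pow n Q Hn HQ) as HTd. set (T := Tn n Q) in *.
set (d := (n - 1)%nat) in *.
assert (HT432 : T > 432).
{ apply Rmult_lt_reg_l with mu0; auto. apply Rle_lt_trans with 3; auto. lra. }
assert (HQT : T <= Q) by (rewrite <- HTd; unfold d; rewrite <- (pow_1 T) at 1; apply Rle_pow; lia || lra).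
destruct (floor_nat T) as [K [HK1 HK2]]; [lra|].
assert (HK100 : 100 <= INR K) by lra.
assert (HK1n : (1 <= K)%nat) by (apply INR_le; simpl; lra).
assert (HKT : T <= (101/100) * INR K) by lra.
assert (HKd : INR (K ^ d) <= Q) by (rewrite pow_INR, <- HTd; apply pow_le_base; lra).
set (u := mu0 * Q). assert (Hu0 : 0 < u) by (unfold u; nra).
set (X := u * T). assert (HX : 3 * Q < X) by (unfold X, u; nra).
set (rho := PI / X). assert (Hrho : rho * (u * T) = PI) by (unfold rho, X; field; nra).
assert (Hrho0 : 0 < rho) by (unfold rho; apply Rdiv_lt_0_compat; lra).
assert (Hrhos : rho < 1/100).
{ unfold rho. apply Rmult_lt_reg_r with X; [lra|]. replace (PI / X * X) with PI by (field; lra). lra. }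
set (om := PI / (u * INR K)).
assert (Hom : om <= (101/100) * rho).
{ unfold om, rho, X. apply Rmult_le_reg_r with (u * INR K). nra.
  replace (PI / (u * INR K) * (u * INR K)) with PI by (field; split; lra).
  replace ((101/100) * (PI / (u * T)) * (u * INR K)) with (PI * ((101/100) * INR K / T)) by (field; split; lra).
  assert (1 <= (101/100) * INR K / T).
  { apply Rmult_le_reg_r with T; [lra|]. replace ((101/100) * INR K / T * T) with ((101/100) * INR K) by (field; lra). lra. }
  nra. }
assert (Hom0 : 0 < om) by (unfold om; apply Rdiv_lt_0_compat; nra).
set (Rr := c4 * rho). set (h := Rr / 2).
assert (HRr : 0 < Rr < rho) by (unfold Rr; split; nra).
set (D := 4 * rho).
destruct (floor_nat (3 * PI / (2 * D))) as [L0 [HL1 HL2]].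
{ left; apply Rdiv_lt_0_compat; unfold D; lra. }
set (L := S L0). assert (HL : INR L = INR L0 + 1) by (unfold L; apply S_INR).
assert (HvL : forall v, (v < L)%nat -> INR v * (4 * rho) <= 3 * PI / 2).
{ intros v Hv. assert (INR v <= INR L0) by (apply le_INR; unfold L in Hv; lia).
  apply Rle_trans with (INR L0 * D). apply Rmult_le_compat_r; unfold D; lra.
  apply Rle_trans with (3 * PI / (2 * D) * D). apply Rmult_le_compat_r; [unfold D; lra|exact HL1].
  right; field; unfold D; lra. }
set (cc := fun v => PI / 4 + INR v * D).
set (c := fun i j => cc (dig L (j - 2) i)).
assert (Hcb : forall i j, PI / 4 <= c i j <= 7 * PI / 4).
{ intros i j. unfold c, cc. assert (Hd : (dig L (j-2) i < L)%nat) by (apply dig_lt; unfold L; lia).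
  specialize (HvL _ Hd). fold D in HvL. assert (0 <= INR (dig L (j - 2) i) * D) by (apply Rmult_le_pos; [apply pos_INR|unfold D; lra]). lra. }
set (Good := fun i => exists m : nat, (1 <= m)%nat /\ u <= INR m <= Q /\ exists z : nat -> Z, forall j, (2 <= j <= n)%nat ->
   Rabs (c i j - PI * IZR (z j) / INR m) < om).
assert (W : forall i, {mz : nat * (nat -> Z) | Good i -> (1 <= fst mz)%nat /\ u <= INR (fst mz) <= Q /\
   forall j, (2 <= j <= n)%nat -> Rabs (c i j - PI * IZR (snd mz j) / INR (fst mz)) < om}).
{ intro i. apply constructive_indefinite_description. destruct (classic (Good i)) as [[m [H1 [H2 [z Hz]]]]|Hg].
  - exists (m, z). intros _. simpl. auto.
  - exists (0%nat, fun _ => 0%Z). intros Hc0; contradiction. }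
set (gb := fun i => if excluded_middle_informative (Good i) then true else false).
set (gl := filter gb (seq 0 (L ^ d))).
set (N := length gl).
set (mm := fun k => fst (proj1_sig (W (nth k gl 0%nat)))).
set (zf := fun k => snd (proj1_sig (W (nth k gl 0%nat)))).
set (pt := fun k j => PI * INR (Z.to_nat (zf k j)) / INR (mm k)).
assert (Hgl : forall k, (k < N)%nat -> (nth k gl 0%nat < L ^ d)%nat /\ Good (nth k gl 0%nat)).
{ intros k Hk. pose proof (nth_In gl 0%nat Hk) as Hin. apply filter_In in Hin.
  destruct Hin as [H1 H2]. apply in_seq in H1. split; [lia|].
  unfold gb in H2. destruct excluded_middle_informative; auto; discriminate. }
assert (Hpt : forall k, (k < N)%nat -> (1 <= mm k)%nat /\ u <= INR (mm k) <= Q /\ forall j, (2 <= j <= n)%nat ->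
   INR (Z.to_nat (zf k j)) = IZR (zf k j) /\ 1 <= IZR (zf k j) /\ IZR (zf k j) <= 2 * INR (mm k) /\
   Rabs (c (nth k gl 0%nat) j - pt k j) < om).
{ intros k Hk. destruct (Hgl k Hk) as [_ Hg]. destruct (proj2_sig (W (nth k gl 0%nat)) Hg) as [B1 [B2 B3]].
  fold (mm k) in B1, B2, B3. fold (zf k) in B3.
  split; auto. split; auto. intros j Hj. specialize (B3 j Hj). specialize (Hcb (nth k gl 0%nat) j).
  assert (HmR : 1 <= INR (mm k)) by (change 1 with (INR 1); apply le_INR; auto).
  apply Rabs_def2 in B3.
  assert (Hq1 : 0 < IZR (zf k j)).
  { assert (0 < PI * IZR (zf k j) / INR (mm k)) by lra.
    apply Rmult_lt_reg_r with (PI / INR (mm k)). apply Rdiv_lt_0_compat; lra.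
    replace (IZR (zf k j) * (PI / INR (mm k))) with (PI * IZR (zf k j) / INR (mm k)) by (field; lra). lra. }
  assert (Hq2 : IZR (zf k j) <= 2 * INR (mm k)).
  { assert (PI * IZR (zf k j) / INR (mm k) <= 2 * PI) by lra.
    apply Rmult_le_reg_r with (PI / INR (mm k)). apply Rdiv_lt_0_compat; lra.
    replace (IZR (zf k j) * (PI / INR (mm k))) with (PI * IZR (zf k j) / INR (mm k)) by (field; lra).
    replace (2 * INR (mm k) * (PI / INR (mm k))) with (2 * PI) by (field; lra). lra. }
  assert (Hz1 : (1 <= zf k j)%Z) by (assert (0 < zf k j)%Z by (apply lt_IZR; auto); lia).
  assert (Ei : INR (Z.to_nat (zf k j)) = IZR (zf k j)) by (rewrite INR_IZR_INZ, Z2Nat.id; auto; lia).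
  split; auto. split; [apply IZR_le; auto|]. split; auto.
  unfold pt. rewrite Ei. apply Rabs_def1; lra. }
apply mono_meas with (INR N * (2 * h) ^ (n - 1)).
- apply (family_meas n Q mu0 c4 N pt h); auto.
  + unfold h; lra.
  + assert (E : PI * c4 / (mu0 * Q * T) = Rr) by (unfold Rr, rho, X, u; field; split; lra).
    fold T. rewrite E. unfold h; lra.
  + intros k Hk. destruct (Hpt k Hk) as [B1 [B2 B3]]. split.
    * exists (mm k). split; [fold u; auto|]. split; auto. exists (fun j => Z.to_nat (zf k j)).
      intros j Hj. destruct (B3 j Hj) as [E1 [E2 [E3 _]]]. split; [split|].
      -- apply INR_le. rewrite E1. simpl. lra.
      -- apply INR_le. rewrite E1, mult_INR. simpl. lra.
      -- reflexivity.
    * intros j Hj. destruct (B3 j Hj) as [_ [_ [_ E4]]]. specialize (Hcb (nth k gl 0%nat) j).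
      apply Rabs_def2 in E4. unfold h. lra.
  + intros k k' Hk Hk' Hne.
    assert (Hnd : NoDup gl) by (apply NoDup_filter, seq_NoDup).
    assert (Hii : nth k gl 0%nat <> nth k' gl 0%nat).
    { intro E. apply Hne. eapply (proj1 (NoDup_nth gl 0%nat)); eauto. }
    destruct (Hgl k Hk) as [Hi _]. destruct (Hgl k' Hk') as [Hi' _].
    destruct (dig_differ L d _ _ ltac:(unfold L; lia) Hi Hi' Hii) as [t [Ht Hdt]].
    exists (t + 2)%nat. split; [unfold d in Ht; lia|].
    destruct (Hpt k Hk) as [_ [_ B]]. destruct (B (t+2)%nat ltac:(unfold d in Ht; lia)) as [_ [_ [_ B1]]].
    destruct (Hpt k' Hk') as [_ [_ B']]. destruct (B' (t+2)%nat ltac:(unfold d in Ht; lia)) as [_ [_ [_ B2]]].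
    assert (Hcc : D <= Rabs (c (nth k gl 0%nat) (t+2)%nat - c (nth k' gl 0%nat) (t+2)%nat)).
    { unfold c, cc. replace (t + 2 - 2)%nat with t by lia.
      replace (PI / 4 + INR (dig L t (nth k gl 0%nat)) * D - (PI / 4 + INR (dig L t (nth k' gl 0%nat)) * D))
        with ((INR (dig L t (nth k gl 0%nat)) - INR (dig L t (nth k' gl 0%nat))) * D) by ring.
      rewrite Rabs_mult, (Rabs_pos_eq D) by (unfold D; lra). pose proof (INR_dist_ge1 _ _ Hdt). unfold D. nra. }
    set (c1 := c (nth k gl 0%nat) (t+2)%nat) in *. set (c2 := c (nth k' gl 0%nat) (t+2)%nat) in *.
    set (p1 := pt k (t+2)%nat) in *. set (p2 := pt k' (t+2)%nat) in *.
    assert (Htri : Rabs (c1 - c2) <= Rabs (c1 - p1) + Rabs (p1 - p2) + Rabs (c2 - p2)).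
    { unfold Rabs; repeat destruct Rcase_abs; lra. }
    unfold h, D in *. lra.
-
  assert (HLd : 0 < INR L) by (rewrite HL; pose proof (pos_INR L0); lra).
  destruct (floor_nat u) as [Mu [HM1 HM2]]; [lra|].
  set (Em := fun m v => exists b : Z, Rabs (PI / 4 + INR v * (4 * rho) - PI * IZR b / INR m) < PI / (INR m * INR K)).
  assert (Hbad : forall i, (i < L ^ d)%nat -> indic (~ Good i) <=
     sumR (fun m' => prodR (fun t => indic (Em (S m') (dig L t i))) 0 d) Mu).
  { intros i Hi. destruct (classic (Good i)) as [Hg|Hg].
    - rewrite indic_false by tauto. apply sumR_nonneg. intros. apply prodR_nonneg. intros; apply indic_01.
    - rewrite indic_true by auto.
      destruct (dirichlet d K (fun t => c i (t + 2)%nat / PI) HK1n) as [m [Hm [b Hb]]].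
      assert (HmR : 1 <= INR m) by (change 1 with (INR 1); apply le_INR; lia).
      assert (Hclose : forall t, (t < d)%nat -> Rabs (c i (t+2)%nat - PI * IZR (b t) / INR m) < PI / (INR m * INR K)).
      { intros t Ht. specialize (Hb t Ht).
        replace (c i (t+2)%nat - PI * IZR (b t) / INR m) with (PI / INR m * (INR m * (c i (t + 2)%nat / PI) - IZR (b t))) by (field; lra).
        rewrite Rabs_mult, (Rabs_pos_eq (PI / INR m)) by (left; apply Rdiv_lt_0_compat; lra).
        apply Rlt_le_trans with (PI / INR m * / INR K).
        apply Rmult_lt_compat_l; auto. apply Rdiv_lt_0_compat; lra. right; field; lra. }
      assert (Hmlt : INR m < u).
      { apply Rnot_le_lt. intro Hge. apply Hg. exists m. split; [lia|]. split.
        split; auto. apply Rle_trans with (INR (K ^ d)); auto. apply le_INR; lia.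
        exists (fun j => b (j - 2)%nat). intros j Hj. specialize (Hclose (j - 2)%nat ltac:(unfold d; lia)).
        replace (j - 2 + 2)%nat with j in Hclose by lia.
        apply Rlt_le_trans with (PI / (INR m * INR K)); auto.
        unfold om. apply Rmult_le_compat_l; [lra|]. apply Rinv_le_contravar. nra. apply Rmult_le_compat_r; lra. }
      assert (HmM : (m - 1 < Mu)%nat).
      { assert (INR m < INR Mu + 1) by lra. rewrite <- S_INR in H. apply INR_lt in H. lia. }
      apply Rle_trans with (prodR (fun t => indic (Em (S (m - 1)) (dig L t i))) 0 d).
      + rewrite (prodR_ext _ (fun _ => 1)). rewrite prodR_const, pow1. lra.
        intros t Ht. apply indic_true. replace (S (m - 1)) with m by lia. exists (b t).
        specialize (Hclose t ltac:(lia)). unfold c, cc in Hclose. replace (t + 2 - 2)%nat with t in Hclose by lia.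
        exact Hclose.
      + apply (sumR_ge_term (fun m' => prodR (fun t => indic (Em (S m') (dig L t i))) 0 d)); auto.
        intros; apply prodR_nonneg; intros; apply indic_01. }
  assert (HE : forall m', (m' < Mu)%nat -> sumR (fun v => indic (Em (S m') v)) L <= 11 / T * INR L).
  { intros m' Hm'. apply (Ebound (S m') K L u T rho); auto. lia.
    apply Rle_trans with (INR Mu); auto. apply le_INR; lia.
    apply Rle_trans with (3 * PI / (2 * D)). right; reflexivity. lra. }
  assert (Hbadsum : sumR (fun i => indic (~ Good i)) (L ^ d) <= INR (L ^ d) / 2).
  { apply Rle_trans with (sumR (fun i => sumR (fun m' => prodR (fun t => indic (Em (S m') (dig L t i))) 0 d) Mu) (L ^ d)).
    apply sumR_le; auto.
    rewrite sumR_swap.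
    rewrite (sumR_ext _ (fun m' => (sumR (fun v => indic (Em (S m') v)) L) ^ d)).
    2:{ intros m' _. apply (sumR_prod_dig (fun v => indic (Em (S m') v))). unfold L; lia. }
    apply Rle_trans with (sumR (fun _ => (11 / T * INR L) ^ d) Mu).
    { apply sumR_le. intros m' Hm'. apply pow_le_base. apply sumR_nonneg; intros; apply indic_01. auto. }
    rewrite sumR_const, Rpow_mult_distr, pow_INR.
    assert (E11 : (11 / T) ^ d = 11 ^ d / Q) by (rewrite <- HTd; unfold Rdiv; rewrite Rpow_mult_distr, pow_inv; reflexivity).
    rewrite E11.
    assert (Hfac : INR Mu * (11 ^ d / Q) <= / 2).
    { apply Rle_trans with (u * (11 ^ d / Q)).
      apply Rmult_le_compat_r; auto. unfold Rdiv; apply Rmult_le_pos; [apply pow_le; lra|left; apply Rinv_0_lt_compat; lra].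
      unfold u. replace (mu0 * Q * (11 ^ d / Q)) with (mu0 * 11 ^ d) by (field; lra).
      assert (E4 : (4 * PI) ^ n = 4 * PI * (4 * PI) ^ d) by (unfold d; replace n with (S (n - 1)) at 1 by lia; reflexivity).
      assert (H11 : 11 ^ d <= (4 * PI) ^ d) by (apply pow_le_base; lra).
      assert (Hpd : 0 < (4 * PI) ^ d) by (apply pow_lt; lra).
      apply Rle_trans with (/ (4 * PI) ^ n * 11 ^ d). apply Rmult_le_compat_r; auto. apply pow_le; lra.
      rewrite E4. rewrite Rinv_mult.
      apply Rle_trans with (/ (4 * PI) * (/ (4 * PI) ^ d * (4 * PI) ^ d)).
      { rewrite <- Rmult_assoc. apply Rmult_le_compat_l; auto. rewrite <- Rinv_mult.
        left; apply Rinv_0_lt_compat. nra. }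
      rewrite Rinv_l by lra. rewrite Rmult_1_r. apply Rinv_le_contravar; lra. }
    assert (0 <= INR L ^ d) by (apply pow_le; lra). nra. }
  assert (HNsum : INR N = sumR (fun i => indic (Good i)) (L ^ d)).
  { unfold N, gl. rewrite length_filter_seq. apply sumR_ext. intros i _. unfold gb, indic.
    destruct excluded_middle_informative; reflexivity. }
  assert (Htot : sumR (fun i => indic (Good i)) (L ^ d) + sumR (fun i => indic (~ Good i)) (L ^ d) = INR (L ^ d)).
  { rewrite <- sumR_plus. rewrite (sumR_ext _ (fun _ => 1)). rewrite sumR_const. lra.
    intros; apply indic_compl. }
  assert (HN : INR (L ^ d) / 2 <= INR N) by lra.
  rewrite pow_INR in HN.
  assert (E2 : 2 * h = Rr) by (unfold h; field). rewrite E2.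
  assert (HLR : c4 / 6 <= INR L * Rr).
  { assert (E3 : 3 * PI / (2 * D) * Rr = 3 * PI * c4 / 8) by (unfold Rr, D; field; lra).
    assert (3 * PI / (2 * D) * Rr <= INR L * Rr) by (apply Rmult_le_compat_r; lra). assert (c4 / 6 <= 3 * PI * c4 / 8) by nra. lra. }
  assert (H6 : (c4 / 6) ^ (n - 1) <= (INR L * Rr) ^ (n - 1)) by (apply pow_le_base; lra).
  rewrite Rpow_mult_distr in H6. fold d in H6 |- *.
  assert (0 <= Rr ^ d) by (apply pow_le; lra).
  apply Rle_trans with (INR L ^ d / 2 * Rr ^ d). lra.
  apply Rmult_le_compat_r; auto.
Qed.

Theorem mainTheorem9 (n : nat) (Q mu0 c4 : R)
  (hn : (2 <= n)%nat) (hQ : 1 <= Q)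
  (hmu0 : 0 < mu0) (hmu0' : mu0 <= / (4 * PI) ^ n)
  (hc4 : 0 < c4) (hc4' : c4 < 1) :
  lebesgue_outer_measure_ge n (approx_set n Q mu0 c4)
    (c4 ^ (n - 1) * (/ 3) ^ (n - 1) * (/ 2) ^ n).
Proof.
rewrite target_eq by auto.
pose proof (mu0_small n mu0 hn hmu0') as Hm.
destruct (Rlt_or_le (mu0 * Q * Tn n Q) c4) as [H0|H0].
- apply regime0; auto.
- destruct (Rle_or_lt (mu0 * Tn n Q) 3) as [H1|H1].
  + apply regime1; auto.
  + apply regime2; auto.
Qed.
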